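(* Let $(X,d)$ be a complete metric space and $T\colon X\to X$ a mapping for which there exists $k<\kappa(X)$ with $$d(T^nx,T^ny)\le k\,D(x,o(y))$$ for all $n\in\mathbb N$ and all $(x,y)\in X\times X$ with $D(x,o(y))\le D(x,o(x))$. If some orbit of $T$ is bounded, then $T$ has a fixed point.
   Context: The orbit of $x$ under $T$ is $o(x)=\{x\}\cup\{T^nx:n\in\mathbb N\}$; for nonempty $C\subseteq X$, $D(x,C)=\sup\{d(x,y):y\in C\}$. $B(x,r)$ denotes the closed ball. For $c\ge1$, balls in $X$ are $c$-regular if for every $k'<c$ there are $\mu,\alpha\in(0,1)$ such that for all $x,y\in X$ and $r>0$ with $d(x,y)\ge(1-\mu)r$ there exists $z\in X$ with $B(x,(1+\mu)r)\cap B(y,k'(1+\mu)r)\subseteq B(z,\alpha r)$. The Lifschitz characteristic is $\kappa(X)=\sup\{c\ge1:\text{balls in }X\text{ are }c\text{-regular}\}$. *)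

(* Defs.v *)
From Stdlib Require Import Reals.
From Coquelicot Require Import Coquelicot.
Open Scope R_scope.

Section MetricDefs.
Context {X : Type} (d : X -> X -> R).

Definition is_metric : Prop :=
  (forall x y, 0 <= d x y) /\
  (forall x y, d x y = 0 <-> x = y) /\
  (forall x y, d x y = d y x) /\
  (forall x y z, d x z <= d x y + d y z).

Definition cauchy_seq (u : nat -> X) : Prop :=
  forall eps, 0 < eps -> exists N, forall m n, (N <= m)%nat -> (N <= n)%nat -> d (u m) (u n) < eps.

Definition seq_converges_to (u : nat -> X) (l : X) : Prop :=
  forall eps, 0 < eps -> exists N, forall n, (N <= n)%nat -> d (u n) l < eps.

Definition complete_metric : Prop :=
  forall u : nat -> X, cauchy_seq u -> exists l, seq_converges_to u l.

Definition cball (x : X) (r : R) : X -> Prop := fun y => d x y <= r.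

Definition balls_regular (c : R) : Prop :=
  forall k', k' < c ->
    exists mu alpha, 0 < mu < 1 /\ 0 < alpha < 1 /\
      forall x y r, 0 < r -> (1 - mu) * r <= d x y ->
        exists z, forall w, cball x ((1 + mu) * r) w -> cball y (k' * (1 + mu) * r) w ->
                            cball z (alpha * r) w.

Definition lifschitz_char : Rbar :=
  Lub_Rbar (fun c => 1 <= c /\ balls_regular c).

Definition Dsup (x : X) (C : X -> Prop) : Rbar :=
  Lub_Rbar (fun t => exists y, C y /\ t = d x y).

End MetricDefs.

Definition orbit {X : Type} (T : X -> X) (x : X) : X -> Prop :=
  fun y => y = x \/ exists n : nat, (1 <= n)%nat /\ y = Nat.iter n T x.

(* "a <= k * D" where D may be +oo; the inequality is vacuous when D = +oo *)
Definition le_mul_Rbar (a k : R) (D : Rbar) : Prop :=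
  match D with
  | Finite r => a <= k * r
  | _ => True
  end.

Definition bounded_set {X : Type} (d : X -> X -> R) (C : X -> Prop) : Prop :=
  exists M : R, forall y z, C y -> C z -> d y z <= M.

(* Main.v *)
Require Import Defs.
From Stdlib Require Import Reals Lra Lia Classical IndefiniteDescription.
From Coquelicot Require Import Coquelicot.
Open Scope R_scope.

Definition Dle {X : Type} (d : X -> X -> R) (T : X -> X) (x x' : X) (a : R) : Prop :=
  forall n, d x (Nat.iter n T x') <= a.

Lemma orbit_iff {X : Type} (T : X -> X) x w :
  orbit T x w <-> exists n, w = Nat.iter n T x.
Proof.
  split.
  - intros [->|[n [_ ->]]]; [exists 0%nat; reflexivity| exists n; reflexivity].
  - intros [n ->]. destruct n as [|n]; [left; reflexivity|].
    right. exists (S n). split; [lia|reflexivity].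
Qed.

Lemma DsupO_ge {X : Type} (d : X -> X -> R) (T : X -> X) x x' n :
  Rbar_le (Finite (d x (Nat.iter n T x'))) (Dsup d x (orbit T x')).
Proof.
  unfold Dsup. destruct (Lub_Rbar_correct (fun t => exists y, orbit T x' y /\ t = d x y)) as [H _].
  apply H. exists (Nat.iter n T x'). split; [apply orbit_iff; eauto|reflexivity].
Qed.

Lemma DsupO_le {X : Type} (d : X -> X -> R) (T : X -> X) x x' a :
  Dle d T x x' a -> Rbar_le (Dsup d x (orbit T x')) (Finite a).
Proof.
  intros H. unfold Dsup. destruct (Lub_Rbar_correct (fun t => exists y, orbit T x' y /\ t = d x y)) as [_ H2].
  apply H2. intros t [y [Hy ->]]. apply orbit_iff in Hy. destruct Hy as [n ->]. simpl. apply H.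
Qed.

Lemma Dle_of_Rbar {X : Type} (d : X -> X -> R) (T : X -> X) x x' a :
  Rbar_le (Dsup d x (orbit T x')) (Finite a) -> Dle d T x x' a.
Proof.
  intros H n. pose proof (Rbar_le_trans _ _ _ (DsupO_ge d T x x' n) H). simpl in H0. exact H0.
Qed.

Lemma DsupO_fin {X : Type} (d : X -> X -> R) (T : X -> X) x x' a :
  Dle d T x x' a -> exists r, Dsup d x (orbit T x') = Finite r /\ r <= a /\ d x x' <= r.
Proof.
  intros H. pose proof (DsupO_le d T x x' a H) as H1.
  pose proof (DsupO_ge d T x x' 0) as H2.
  destruct (Dsup d x (orbit T x')) as [r| |]; simpl in *; try contradiction.
  exists r. auto.
Qed.

Lemma DsupO_mono {X : Type} (d : X -> X -> R) (T : X -> X) x x' j :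
  Rbar_le (Dsup d x (orbit T (Nat.iter j T x'))) (Dsup d x (orbit T x')).
Proof.
  unfold Dsup at 1. destruct (Lub_Rbar_correct (fun t => exists y, orbit T (Nat.iter j T x') y /\ t = d x y)) as [_ H2].
  apply H2. intros t [y [Hy ->]]. apply orbit_iff in Hy. destruct Hy as [n ->].
  rewrite <- Nat.iter_add. apply DsupO_ge.
Qed.

Definition adm {X : Type} (d : X -> X -> R) (T : X -> X) y x' :=
  Rbar_le (Dsup d y (orbit T x')) (Dsup d y (orbit T y)).

Lemma use_lip {X : Type} (d : X -> X -> R) (T : X -> X) (k K : R)
  (Hmetric : is_metric d)
  (Hlip : forall x y : X,
      Rbar_le (Dsup d x (orbit T y)) (Dsup d x (orbit T x)) ->
      forall n : nat, (1 <= n)%nat ->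
        le_mul_Rbar (d (Nat.iter n T x) (Nat.iter n T y)) k (Dsup d x (orbit T y)))
  (HkK : k <= K) (HK : 0 <= K) y x' a :
  adm d T y x' -> Dle d T y x' a -> forall n, (1 <= n)%nat ->
  d (Nat.iter n T y) (Nat.iter n T x') <= K * a.
Proof.
  intros Ha Hd n Hn. destruct Hmetric as [Hpos _].
  destruct (DsupO_fin d T y x' a Hd) as [r [Hr [Hra Hr0]]].
  pose proof (Hlip y x' Ha n Hn) as H. rewrite Hr in H. simpl in H.
  pose proof (Hpos y x'). nra.
Qed.

Lemma step {X : Type} (d : X -> X -> R) (T : X -> X) (k K mu alpha : R)
  (Hmetric : is_metric d)
  (Hlip : forall x y : X,
      Rbar_le (Dsup d x (orbit T y)) (Dsup d x (orbit T x)) ->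
      forall n : nat, (1 <= n)%nat ->
        le_mul_Rbar (d (Nat.iter n T x) (Nat.iter n T y)) k (Dsup d x (orbit T y)))
  (HkK : k <= K) (HK : 0 <= K) (Hmu : 0 < mu < 1) (Hal : 0 < alpha < 1)
  (Hreg : forall x y r, 0 < r -> (1 - mu) * r <= d x y ->
        exists z, forall w, cball d x ((1 + mu) * r) w -> cball d y (K * (1 + mu) * r) w ->
                            cball d z (alpha * r) w) :
  forall p Rp, 0 <= Rp -> Dle d T p p Rp ->
  exists q Rq, 0 <= Rq /\ Dle d T q q Rq /\ Rq <= Rmax alpha (1 - mu) * Rp /\ d p q <= 3 * Rp.
Proof.
  intros p Rp HRp Hp.
  pose proof Hmetric as HM. destruct HM as [Hpos [Hid [Hsym Htri]]].
  set (beta := Rmax alpha (1 - mu)).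
  assert (Hb1 : alpha <= beta) by apply Rmax_l.
  assert (Hb2 : 1 - mu <= beta) by apply Rmax_r.
  assert (Hb3 : beta < 1) by (apply Rmax_lub_lt; lra).
  assert (Hdd : forall x, d x x = 0) by (intro x; apply Hid; reflexivity).
  set (E := fun t => exists y m, adm d T y (Nat.iter m T p) /\ Dle d T y (Nat.iter m T p) (-t)).
  assert (Hub0 : is_upper_bound E 0).
  { intros t [y [m [_ Hd]]]. specialize (Hd 0%nat). simpl in Hd.
    pose proof (Hpos y (Nat.iter m T p)). lra. }
  assert (Hne : E (-Rp)).
  { exists p, 0%nat. split; [apply Rbar_le_refl|]. rewrite Ropp_involutive. exact Hp. }
  destruct (completeness E (ex_intro _ 0 Hub0) (ex_intro _ _ Hne)) as [L [HLub HLleast]].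
  set (psi := - L).
  assert (Hlow : forall y m a, adm d T y (Nat.iter m T p) -> Dle d T y (Nat.iter m T p) a -> psi <= a).
  { intros y m a H1 H2. assert (E (-a)) by (exists y, m; rewrite Ropp_involutive; auto).
    apply HLub in H. unfold psi. lra. }
  assert (Hnear : forall eps, 0 < eps -> exists y m a, adm d T y (Nat.iter m T p) /\
             Dle d T y (Nat.iter m T p) a /\ a < psi + eps).
  { intros eps Heps. apply NNPP. intro H.
    assert (is_upper_bound E (L - eps)).
    { intros t Ht. destruct (Rle_or_lt t (L - eps)) as [?|Hlt]; auto. exfalso. apply H.
      destruct Ht as [y [m [H1 H2]]]. exists y, m, (-t). unfold psi. repeat split; auto. lra. }
    apply HLleast in H0. lra. }
  assert (Hpsi0 : 0 <= psi) by (apply HLleast in Hub0; unfold psi; lra).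
  assert (HpsiR : psi <= Rp) by (apply (Hlow p 0%nat Rp); [apply Rbar_le_refl | exact Hp]).
  destruct (Req_dec Rp 0) as [HR0|HR0].
  { exists p, 0. split; [lra|]. split; [rewrite HR0 in Hp; exact Hp|]. split; [rewrite HR0; lra|].
    rewrite Hdd; lra. }
  assert (HRpos : 0 < Rp) by lra.
  destruct (Req_dec psi 0) as [Hps0|Hps0].
  - set (eps := beta * Rp / (1 + K)).
    assert (Heps : 0 < eps) by (unfold eps; apply Rdiv_lt_0_compat; nra).
    assert (HepsR : (1 + K) * eps = beta * Rp) by (unfold eps; field; lra).
    destruct (Hnear eps Heps) as [y [m [a [Ha [Hd Hlt]]]]].
    set (x' := Nat.iter m T p) in *.
    assert (Ha0 : 0 <= a) by (specialize (Hd 0%nat); simpl in Hd; pose proof (Hpos y x'); lra).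
    exists y, ((1 + K) * a). repeat split.
    + nra.
    + intros [|n]; simpl.
      * rewrite Hdd. nra.
      * pose proof (Htri y (Nat.iter (S n) T x') (Nat.iter (S n) T y)).
        pose proof (Hd (S n)).
        pose proof (use_lip d T k K Hmetric Hlip HkK HK y x' a Ha Hd (S n) ltac:(lia)).
        rewrite Hsym in H1. simpl in *. nra.
    + nra.
    + pose proof (Htri p x' y). pose proof (Hp m). pose proof (Hd 0%nat). simpl in *.
      rewrite Hsym in H1. fold x' in H0.
      assert (a <= Rp) by nra. lra.
  - assert (Hpsi : 0 < psi) by lra.
    destruct (Hnear (mu * psi) ltac:(nra)) as [y [m0 [a [Ha [Hd Hlt]]]]].
    set (x' := Nat.iter m0 T p) in *.
    assert (Hdp : d p y <= Rp + a).
    { pose proof (Htri p x' y). pose proof (Hp m0). pose proof (Hd 0%nat). simpl in *.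
      rewrite Hsym in H1. fold x' in H0. lra. }
    destruct (classic (exists m, (1 <= m)%nat /\ (1 - mu) * psi <= d y (Nat.iter m T y)))
      as [[m [Hm Hge]] | Hno].
    + destruct (Hreg y (Nat.iter m T y) psi Hpsi Hge) as [z Hz].
      assert (Hdz : Dle d T z (Nat.iter m T x') (alpha * psi)).
      { intro j. apply Hz; unfold cball.
        - rewrite <- Nat.iter_add. pose proof (Hd (j + m)%nat). nra.
        - rewrite <- Nat.iter_add, Nat.add_comm, Nat.iter_add.
          assert (Had : adm d T y (Nat.iter j T x')).
          { unfold adm. eapply Rbar_le_trans; [apply DsupO_mono | exact Ha]. }
          assert (Hdj : Dle d T y (Nat.iter j T x') a).
          { intro n. rewrite <- Nat.iter_add. apply Hd. }
          pose proof (use_lip d T k K Hmetric Hlip HkK HK y _ a Had Hdj m Hm). nra. }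
      destruct (classic (adm d T z (Nat.iter m T x'))) as [Hadz|Hnadz].
      * exfalso. assert (Nat.iter m T x' = Nat.iter (m + m0) T p) by (unfold x'; rewrite Nat.iter_add; reflexivity).
        rewrite H in Hadz, Hdz. pose proof (Hlow _ _ _ Hadz Hdz). nra.
      * apply Rbar_not_le_lt in Hnadz.
        assert (Hzz : Dle d T z z (alpha * psi)).
        { apply Dle_of_Rbar. eapply Rbar_le_trans; [apply Rbar_lt_le; exact Hnadz|].
          apply DsupO_le. exact Hdz. }
        exists z, (alpha * psi). repeat split.
        -- nra.
        -- exact Hzz.
        -- nra.
        -- pose proof (Htri p (Nat.iter m T x') z). pose proof (Hdz 0%nat). simpl in H0.
           rewrite Hsym in H0.
           assert (Nat.iter m T x' = Nat.iter (m + m0) T p) by (unfold x'; rewrite Nat.iter_add; reflexivity).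
           pose proof (Hp (m + m0)%nat). rewrite <- H1 in H2. nra.
    + exists y, ((1 - mu) * psi). repeat split.
      * nra.
      * intros [|n].
        -- simpl. rewrite Hdd. nra.
        -- destruct (Rle_or_lt (d y (Nat.iter (S n) T y)) ((1 - mu) * psi)) as [?|Hlt']; auto.
           exfalso. apply Hno. exists (S n). split; [lia|lra].
      * nra.
      * nra.
Qed.

Theorem corollary4p5 (X : Type) (d : X -> X -> R) (T : X -> X)
  (Hmetric : is_metric d) (Hcomplete : complete_metric d)
  (k : R) (Hk : Rbar_lt (Finite k) (lifschitz_char d))
  (Hlip : forall x y : X,
      Rbar_le (Dsup d x (orbit T y)) (Dsup d x (orbit T x)) ->
      forall n : nat, (1 <= n)%nat ->
        le_mul_Rbar (d (Nat.iter n T x) (Nat.iter n T y)) k (Dsup d x (orbit T y)))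
  (Hbdd : exists x0 : X, bounded_set d (orbit T x0)) :
  exists z : X, T z = z.
Proof.
  pose proof Hmetric as HM. destruct HM as [Hpos [Hid [Hsym Htri]]].
  assert (Hdd : forall x, d x x = 0) by (intro x; apply Hid; reflexivity).
  assert (Hc : exists c, 1 <= c /\ balls_regular d c /\ k < c).
  { apply NNPP. intro H.
    assert (Hub : is_ub_Rbar (fun c => 1 <= c /\ balls_regular d c) k).
    { intros c [H1 H2]. simpl. destruct (Rle_or_lt c k); auto. exfalso. apply H. exists c. auto. }
    destruct (Lub_Rbar_correct (fun c => 1 <= c /\ balls_regular d c)) as [_ H2].
    apply H2 in Hub. unfold lifschitz_char in Hk. apply (Rbar_lt_not_le _ _ Hk Hub). }
  destruct Hc as [c [Hc1 [Hreg Hkc]]].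
  set (K := Rmax k 0).
  assert (HkK : k <= K) by apply Rmax_l.
  assert (HK : 0 <= K) by apply Rmax_r.
  assert (HKc : K < c) by (apply Rmax_lub_lt; lra).
  destruct (Hreg K HKc) as [mu [alpha [Hmu [Hal Hreg']]]].
  set (beta := Rmax alpha (1 - mu)).
  assert (Hb1 : alpha <= beta) by apply Rmax_l.
  assert (Hb3 : beta < 1) by (apply Rmax_lub_lt; lra).
  assert (Hb0 : 0 < beta) by lra.
  destruct Hbdd as [x0 [M HM0]].
  assert (Hx0 : Dle d T x0 x0 M).
  { intro n. apply HM0; apply orbit_iff; [exists 0%nat|exists n]; reflexivity. }
  assert (HM0' : 0 <= M) by (specialize (Hx0 0%nat); simpl in Hx0; rewrite Hdd in Hx0; lra).
  set (P := fun pr : X * R => 0 <= snd pr /\ Dle d T (fst pr) (fst pr) (snd pr)).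
  assert (Hf : forall pr, exists pr', P pr -> P pr' /\ snd pr' <= beta * snd pr /\
                                          d (fst pr) (fst pr') <= 3 * snd pr).
  { intros [p Rp]. destruct (classic (P (p, Rp))) as [HP|HP].
    - destruct HP as [H1 H2]. simpl in *.
      destruct (step d T k K mu alpha Hmetric Hlip HkK HK Hmu Hal Hreg' p Rp H1 H2)
        as [q [Rq [Hq1 [Hq2 [Hq3 Hq4]]]]].
      exists (q, Rq). intros _. unfold P; simpl. auto.
    - exists (p, Rp). intro; contradiction. }
  set (f := fun pr => proj1_sig (constructive_indefinite_description _ (Hf pr))).
  assert (Hfp : forall pr, P pr -> P (f pr) /\ snd (f pr) <= beta * snd pr /\
                                   d (fst pr) (fst (f pr)) <= 3 * snd pr).
  { intros pr. unfold f. destruct (constructive_indefinite_description _ (Hf pr)) as [pr' H]. exact H. }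
  set (s := fun n => Nat.iter n f (x0, M)).
  set (u := fun n => fst (s n)).
  set (r := fun n => snd (s n)).
  assert (HsS : forall n, s (S n) = f (s n)) by reflexivity.
  assert (HP : forall n, P (s n)).
  { induction n. - split; simpl; auto. - rewrite HsS. apply Hfp. exact IHn. }
  assert (Hr : forall n, r n <= beta ^ n * M).
  { induction n. - unfold r; simpl. lra.
    - unfold r. rewrite HsS. destruct (Hfp _ (HP n)) as [_ [H _]]. fold (r n) in H.
      simpl. nra. }
  assert (Hr0 : forall n, 0 <= r n) by (intro n; apply (HP n)).
  assert (Hstep : forall n, d (u n) (u (S n)) <= 3 * r n).
  { intro n. unfold u. rewrite HsS. apply Hfp. apply HP. }
  assert (Hdist : forall m j, d (u m) (u (m + j)%nat) <= 3 * M * (beta ^ m - beta ^ (m + j)) / (1 - beta)).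
  { intros m j. induction j.
    - rewrite Nat.add_0_r, Hdd. unfold Rdiv. rewrite Rminus_diag. lra.
    - rewrite Nat.add_succ_r. pose proof (Htri (u m) (u (m + j)%nat) (u (S (m + j)))).
      pose proof (Hstep (m + j)%nat). pose proof (Hr (m + j)%nat).
      assert (E : 3 * M * (beta ^ m - beta ^ S (m + j)) / (1 - beta) =
                  3 * M * (beta ^ m - beta ^ (m + j)) / (1 - beta) + 3 * beta ^ (m + j) * M)
        by (simpl; field; lra).
      rewrite E. lra. }
  assert (Hdist' : forall m j, d (u m) (u (m + j)%nat) <= 3 * M * beta ^ m / (1 - beta)).
  { intros m j. eapply Rle_trans; [apply Hdist|].
    pose proof (pow_le beta (m + j) ltac:(lra)).
    apply Rmult_le_compat_r; [apply Rlt_le, Rinv_0_lt_compat; lra|]. nra. }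
  assert (Habs : Rabs beta < 1) by (rewrite Rabs_pos_eq; lra).
  assert (Hcauchy : cauchy_seq d u).
  { intros eps Heps.
    destruct (pow_lt_1_zero beta Habs (eps * (1 - beta) / (3 * M + 1))) as [N HN].
    { apply Rdiv_lt_0_compat; nra. }
    exists N.
    assert (Hb : forall m, (N <= m)%nat -> forall j, d (u m) (u (m + j)%nat) < eps).
    { intros m Hm j. eapply Rle_lt_trans; [apply Hdist'|].
      specialize (HN m Hm). rewrite Rabs_pos_eq in HN by (apply pow_le; lra).
      assert (E1 : eps * (1 - beta) / (3 * M + 1) * (3 * M + 1) = eps * (1 - beta)) by (field; lra).
      assert (E2 : 3 * M * beta ^ m / (1 - beta) * (1 - beta) = 3 * M * beta ^ m) by (field; lra).
      pose proof (pow_le beta m ltac:(lra)).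
      assert (3 * M * beta ^ m < eps * (1 - beta)) by nra.
      nra. }
    intros m n Hm Hn. destruct (Nat.le_ge_cases m n) as [Hmn|Hmn].
    - replace n with (m + (n - m))%nat by lia. apply Hb; auto.
    - rewrite Hsym. replace m with (n + (m - n))%nat by lia. apply Hb; auto. }
  destruct (Hcomplete u Hcauchy) as [z Hz].
  exists z. apply NNPP. intro Hne.
  set (delta := d z (T z)).
  assert (Hdel : 0 < delta).
  { pose proof (Hpos z (T z)). destruct (Req_dec delta 0) as [H0|H0].
    - exfalso. apply Hne. symmetry. apply Hid. exact H0.
    - unfold delta in *. lra. }
  set (eps := delta / (2 * (1 + K))).
  assert (Heps : 0 < eps) by (unfold eps; apply Rdiv_lt_0_compat; lra).
  assert (Heps2 : (1 + K) * eps * 2 = delta) by (unfold eps; field; lra).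
  destruct (Hz (eps / 2) ltac:(lra)) as [N1 HN1].
  destruct (pow_lt_1_zero beta Habs (eps / (2 * (M + 1)))) as [N2 HN2].
  { apply Rdiv_lt_0_compat; lra. }
  set (j := Nat.max N1 N2).
  specialize (HN1 j ltac:(lia)). specialize (HN2 j ltac:(lia)).
  rewrite Rabs_pos_eq in HN2 by (apply pow_le; lra).
  assert (Hrj : r j < eps / 2).
  { pose proof (Hr j). pose proof (pow_le beta j ltac:(lra)).
    assert (E1 : eps / (2 * (M + 1)) * (2 * (M + 1)) = eps) by (field; lra).
    nra. }
  set (sj := d z (u j) + r j).
  assert (Hsj : sj < eps) by (unfold sj; rewrite Hsym; lra).
  assert (Hsj0 : 0 <= sj) by (unfold sj; pose proof (Hpos z (u j)); pose proof (Hr0 j); lra).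
  assert (Huj : Dle d T (u j) (u j) (r j)) by apply (HP j).
  assert (Hzj : Dle d T z (u j) sj).
  { intro n. pose proof (Htri z (u j) (Nat.iter n T (u j))). pose proof (Huj n). unfold sj. lra. }
  assert (Had : adm d T z (u j)).
  { unfold adm. eapply Rbar_le_trans; [apply DsupO_le; exact Hzj|].
    eapply Rbar_le_trans; [|apply (DsupO_ge d T z z 1%nat)]. simpl. fold delta. nra. }
  pose proof (use_lip d T k K Hmetric Hlip HkK HK z (u j) sj Had Hzj 1%nat ltac:(lia)) as H1.
  simpl in H1.
  pose proof (Huj 1%nat) as H2. simpl in H2.
  pose proof (Htri z (u j) (T z)) as H3. pose proof (Htri (u j) (T (u j)) (T z)) as H4.
  rewrite (Hsym (T (u j)) (T z)) in H4.
  assert (delta <= (1 + K) * sj) by (unfold delta, sj in *; lra).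
  nra.
Qed.
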